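(* Let $\mathcal{E}$ be an information exchange that does not transmit information about actions (with local states $L_i=S_i\times D_i$), let $P$ and $P'$ be decision protocols for $\mathcal{E}$, and let the failure model $\mathcal{F}$ act independently on message and action memory. Let $r$ and $r'$ be corresponding runs of $\mathcal{I}_{P,\mathcal{E},\mathcal{F}}$ and $\mathcal{I}_{P',\mathcal{E},\mathcal{F}}$ respectively. Then: (1) for all agents $i$ and times $m$, if $r_i(m)=(s,d)$ and $r'_i(m)=(s',d')$ then $s=s'$; moreover, the vector of messages sent by agent $i$ in round $m+1$ of $r$ equals that sent by $i$ in round $m+1$ of $r'$, both before and after perturbation by the failure model. (2) For all agents $i$ and times $m$ such that agent $i$ performs only $\mathtt{noop}$ at times $0,\dots,m-1$ in both $r$ and $r'$, we have $r_i(m)=r'_i(m)$.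
   Context: Agents $\mathrm{Agt}=\{1,\dots,n\}$; decision values $V$; actions $A_i=\{\mathtt{noop}\}\cup\{\mathtt{decide}_i(v):v\in V\}$. An information exchange $\mathcal{E}$ gives each agent $i$ a tuple $(L_i,I_i,M_i,\mu_i,\delta_i)$: local states $L_i$, initial states $I_i$, messages $M_i\ni\bot$, $\mu_i:L_i\times A_i\to(\mathrm{Agt}\to M_i)$ (messages $i$ sends each agent), $\delta_i:L_i\times A_i\times\prod_jM_j\to L_i$. It does not transmit information about actions if for each $i$ there are sets $S_i,D_i$ with $L_i=S_i\times D_i$ and functions $\mu'_i$ on $S_i$, $\delta^1_i:S_i\times\prod_jM_j\to S_i$, $\delta^2_i:D_i\times A_i\to D_i$ such that $\mu_i((s,d),a)=\mu'_i(s)$ and $\delta_i((s,d),a,m)=(\delta^1_i(s,m),\delta^2_i(d,a))$ for all $(s,d),a,m$; $s$ is the message memory and $d$ the action memory. A decision protocol is $P=(P_i:L_i\to A_i)_i$. A failure model $\mathcal{F}=(L^*_e,I_e,\delta_e,\mathit{Adv})$ has environment states, nonempty initial ones, update $\delta_e:L^*_e\times\prod_iA_i\to L^*_e$, and adversaries $(\Delta^t,\Delta^r,\Delta^s)$, $\Delta^t,\Delta^r:\mathbb{N}\times\mathrm{Agt}\times\mathrm{Agt}\times\bigcup_iM_i\to\bigcup_iM_i$, $\Delta^s_i:\mathbb{N}\times L_i\to L_i$. It acts independently on message and action memory if for every adversary and agent $i$ there are $\Delta^s_1:\mathbb{N}\times S_i\to S_i$ and $\Delta^s_2:\mathbb{N}\times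 D_i\to D_i$ with $\Delta^s_i(k,(s,d))=(\Delta^s_1(k,s),\Delta^s_2(k,d))$. Runs $r$ of $\mathcal{I}_{P,\mathcal{E},\mathcal{F}}$: $r(0)=((s_e,\alpha),s_1,\dots,s_n)$ with $s_e\in I_e,\alpha\in\mathit{Adv},s_i\in I_i$; from $r(k)=((s_e,\alpha),s_1,\dots,s_n)$, $r(k+1)=((\delta_e(s_e,(a_1,\dots,a_n)),\alpha),s'_1,\dots,s'_n)$ where $a_i=P_i(s_i)$ (the action of $i$ at time $k$), $m_{i,j}=\mu_i(s_i,a_i)(j)$ is the message sent by $i$ to $j$ in round $k+1$ before perturbation, $\Delta^t(k,i,j,m_{i,j})$ after transmission perturbation, $m'_{i,j}=\Delta^r(k,i,j,\Delta^t(k,i,j,m_{i,j}))$ the message received, $s^*_j=\delta_j(s_j,a_j,(m'_{1,j},\dots,m'_{n,j}))$ and $s'_j=\Delta^s_j(k,s^*_j)$. Runs $r$ of $\mathcal{I}_{P,\mathcal{E},\mathcal{F}}$ and $r'$ of $\mathcal{I}_{P',\mathcal{E},\mathcal{F}}$ correspond if $r(0)=r'(0)$. *)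

(* Defs.v *)
From mathcomp Require Import all_boot.
Set Implicit Arguments. Unset Strict Implicit. Unset Printing Implicit Defensive.

(* Actions: noop or decide v (the agent index of decide_i(v) is implicit:
   each agent only ever uses its own action type). *)
Inductive action (V : Type) : Type := noop | decide (v : V).
Arguments noop {V}.

(* Information exchange whose local states are L_i = S_i * D_i.
   M is the common message type (the union of the M_i), with bottom. *)
Record exchange (n : nat) (V : Type) (S D : 'I_n -> Type) (M : Type) := Exchange {
  ex_init : forall i, S i * D i -> Prop;
  ex_bot : M;
  ex_mu : forall i, S i * D i -> action V -> 'I_n -> M;
  ex_delta : forall i, S i * D i -> action V -> ('I_n -> M) -> S i * D i
}.

Arguments ex_init {n V S D M} e i _.
Arguments ex_mu {n V S D M} e i _ _ _.
Arguments ex_delta {n V S D M} e i _ _ _.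

Definition loc n (S D : 'I_n -> Type) (i : 'I_n) : Type := (S i * D i)%type.

Definition no_action_info n V S D M (E : @exchange n V S D M) : Prop :=
  exists (mu' : forall i, S i -> 'I_n -> M)
         (delta1 : forall i, S i -> ('I_n -> M) -> S i)
         (delta2 : forall i, D i -> action V -> D i),
  forall i (s : S i) (d : D i) (a : action V) (m : 'I_n -> M),
    ex_mu E i (s, d) a = mu' i s /\
    ex_delta E i (s, d) a m = (delta1 i s m, delta2 i d a).

Record adversary n (L : 'I_n -> Type) (M : Type) := Adversary {
  adv_t : nat -> 'I_n -> 'I_n -> M -> M;
  adv_r : nat -> 'I_n -> 'I_n -> M -> M;
  adv_s : forall i, nat -> L i -> L i
}.

Arguments adv_s {n L M} a i _ _.

Record failure_model n V (L : 'I_n -> Type) (M Le : Type) := FailureModel {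
  fm_init : Le -> Prop;
  fm_init_ne : exists e, fm_init e;
  fm_delta : Le -> (forall i : 'I_n, action V) -> Le;
  fm_adv : adversary L M -> Prop
}.

Definition acts_independently n V S D M Le
    (F : @failure_model n V (loc S D) M Le) : Prop :=
  forall alpha, fm_adv F alpha -> forall i,
  exists (Ds1 : nat -> S i -> S i) (Ds2 : nat -> D i -> D i),
  forall k (s : S i) (d : D i), adv_s alpha i k (s, d) = (Ds1 k s, Ds2 k d).

Definition protocol n V (L : 'I_n -> Type) := forall i : 'I_n, L i -> action V.
Arguments protocol : clear implicits.

Definition gstate n (L : 'I_n -> Type) (M Le : Type) : Type :=
  ((Le * adversary L M) * (forall i : 'I_n, L i))%type.

Section Runs.
Local Unset Implicit Arguments.
Variables (n : nat) (V : Type) (S D : 'I_n -> Type) (M Le : Type).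
Variables (E : exchange V S D M) (F : failure_model V (loc S D) M Le).
Variable (P : protocol n V (loc S D)).

Definition lstate (r : nat -> gstate (loc S D) M Le) (m : nat) (i : 'I_n) : loc S D i :=
  (r m).2 i.
Definition radv (r : nat -> gstate (loc S D) M Le) (m : nat) : adversary (loc S D) M :=
  (r m).1.2.

(* message sent by i to j in round m+1, before perturbation *)
Definition msg_sent r m (i j : 'I_n) : M :=
  ex_mu E i (lstate r m i) (P i (lstate r m i)) j.
Definition msg_trans r m (i j : 'I_n) : M := adv_t (radv r m) m i j (msg_sent r m i j).
Definition msg_recv r m (i j : 'I_n) : M := adv_r (radv r m) m i j (msg_trans r m i j).

Definition step (k : nat) (g : gstate (loc S D) M Le) : gstate (loc S D) M Le :=
  let se := g.1.1 in let alpha := g.1.2 in let ls := g.2 in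
  let a := fun i => P i (ls i) in
  ((fm_delta F se a, alpha),
   fun j => adv_s alpha j k
     (ex_delta E j (ls j) (a j)
        (fun i => adv_r alpha k i j (adv_t alpha k i j (ex_mu E i (ls i) (a i) j))))).

Definition is_run (r : nat -> gstate (loc S D) M Le) : Prop :=
  [/\ fm_init F (r 0).1.1, fm_adv F (r 0).1.2, (forall i, ex_init E i ((r 0).2 i))
    & forall k, r k.+1 = step k (r k)].
End Runs.
Arguments lstate {n S D M Le} r m i.
Arguments radv {n S D M Le} r m.
Arguments msg_sent {n V S D M Le} E P r m i j.
Arguments msg_trans {n V S D M Le} E P r m i j.
Arguments msg_recv {n V S D M Le} E P r m i j.
Arguments step {n V S D M Le} E F P k g.
Arguments is_run {n V S D M Le} E F P r.

(* Main.v *)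
Require Import Defs.
From mathcomp Require Import all_boot.
From Stdlib Require Import FunctionalExtensionality.

Lemma radv_const (n : nat) (V : Type) (S D : 'I_n -> Type) (M Le : Type)
    (E : exchange V S D M) (F : failure_model V (loc S D) M Le)
    (P : protocol n V (loc S D)) (r : nat -> gstate (loc S D) M Le) :
  is_run E F P r -> forall m, radv r m = radv r 0.
Proof.
move=> [_ _ _ Hs]; elim=> [//|m IH].
by rewrite /radv Hs; exact: IH.
Qed.

Lemma lstate_succ (n : nat) (V : Type) (S D : 'I_n -> Type) (M Le : Type)
    (E : exchange V S D M) (F : failure_model V (loc S D) M Le)
    (P : protocol n V (loc S D)) (r : nat -> gstate (loc S D) M Le) :
  is_run E F P r -> forall m j, lstate r m.+1 j =
   adv_s (radv r m) j m (ex_delta E j (lstate r m j) (P j (lstate r m j))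
       (fun i => msg_recv E P r m i j)).
Proof. by move=> [_ _ _ Hs] m j; rewrite /lstate Hs. Qed.

Arguments radv_const {n V S D M Le E F P r}.
Arguments lstate_succ {n V S D M Le E F P r}.

Theorem lemma13 (n : nat) (V : Type) (S D : 'I_n -> Type) (M Le : Type)
    (E : exchange V S D M) (F : failure_model V (loc S D) M Le)
    (P P' : protocol n V (loc S D))
    (r r' : nat -> gstate (loc S D) M Le) :
  no_action_info E ->
  acts_independently F ->
  is_run E F P r -> is_run E F P' r' ->
  r 0 = r' 0 ->
  (forall (i : 'I_n) (m : nat),
      (lstate r m i).1 = (lstate r' m i).1 /\
      (forall j : 'I_n,
         [/\ msg_sent E P r m i j = msg_sent E P' r' m i j,
             msg_trans E P r m i j = msg_trans E P' r' m i j
           & msg_recv E P r m i j = msg_recv E P' r' m i j])) /\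
  (forall (i : 'I_n) (m : nat),
      (forall k, k < m -> P i (lstate r k i) = noop /\ P' i (lstate r' k i) = noop) ->
      lstate r m i = lstate r' m i).
Proof.
move=> [mu' [d1 [d2 HE]]] HF Hr Hr' H0.
have Hadv : forall m, radv r m = radv r' m.
  by move=> m; rewrite (radv_const Hr) (radv_const Hr') /radv H0.
have Hadm : fm_adv F (radv r 0) by case: Hr.
have Hmu : forall Q i (x : loc S D i), ex_mu E i x (Q i x) = mu' i x.1.
  by move=> Q i [s d] /=; case: (HE i s d (Q i (s, d)) (fun _ => ex_bot E)).
have Hdl : forall i (x : loc S D i) a m, ex_delta E i x a m = (d1 i x.1 m, d2 i x.2 a).
  by move=> i [s d] a m /=; case: (HE i s d a m).
have Hst : forall m i, (lstate r m i).1 = (lstate r' m i).1.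
  elim=> [|m IH] i; first by rewrite /lstate H0.
  rewrite (lstate_succ Hr) (lstate_succ Hr') -Hadv !Hdl.
  have [Ds1 [Ds2 HD]] := HF _ Hadm i.
  rewrite (radv_const Hr) !HD /= IH /msg_recv /msg_trans /msg_sent.
  do 2 f_equal; apply: functional_extensionality => k.
  by rewrite !Hmu IH -Hadv.
have Hmsg : forall m i j, msg_sent E P r m i j = msg_sent E P' r' m i j.
  by move=> m i j; rewrite /msg_sent !Hmu Hst.
split.
  move=> i m; split => // j.
  by rewrite /msg_recv /msg_trans Hmsg Hadv.
move=> i; elim=> [|m IH] Hk; first by rewrite /lstate H0.
have IH' : lstate r m i = lstate r' m i by apply: IH => k Hk'; apply: Hk; apply: ltnW.
have [Ha Ha'] := Hk m (ltnSn m).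
rewrite (lstate_succ Hr) (lstate_succ Hr') -Hadv !Hdl Ha Ha'.
have [Ds1 [Ds2 HD]] := HF _ Hadm i.
rewrite (radv_const Hr) !HD IH'.
do 2 f_equal; f_equal; apply: functional_extensionality => k.
by rewrite /msg_recv /msg_trans Hmsg Hadv.
Qed.
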